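(* Let $R$ be an $\mathbb N$-graded ring with $R_0$ a field, and let $\mathfrak m$ be its homogeneous maximal ideal. Let $M,N$ be finitely generated graded $R$-modules with $N$ torsion-free. If $\phi\colon M_{\mathfrak m}\to N_{\mathfrak m}$ is a morphism of $R_{\mathfrak m}$-modules, then there is a morphism of $R$-modules $\tilde\phi\colon M\to N$ such that $\tilde\phi\otimes_R R_{\mathfrak m}=u\phi$ for some unit $u$ of $R_{\mathfrak m}$. *)

(* Defs.v *)
From mathcomp Require Import all_boot all_order all_algebra.
Set Implicit Arguments. Unset Strict Implicit. Unset Printing Implicit Defensive.
Import GRing.Theory.
Local Open Scope ring_scope.

Definition direct_sum_grading (I : eqType) (V : zmodType) (G : I -> pred V) :=
  [/\ (forall i, 0 \in G i),
      (forall i x y, x \in G i -> y \in G i -> x - y \in G i),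
      (forall v : V, exists (s : seq I) (c : I -> V),
          [/\ uniq s, (forall i, c i \in G i) & v = \sum_(i <- s) c i]) &
      (forall (s : seq I) (c : I -> V), uniq s -> (forall i, c i \in G i) ->
          \sum_(i <- s) c i = 0 -> forall i, i \in s -> c i = 0)].

Definition Ngraded_ring (R : comNzRingType) (Rg : nat -> pred R) :=
  [/\ direct_sum_grading Rg, 1 \in Rg 0%N &
      forall i j (x y : R), x \in Rg i -> y \in Rg j -> x * y \in Rg (i + j)%N].

Definition deg0_field (R : comNzRingType) (Rg : nat -> pred R) :=
  forall x, x \in Rg 0%N -> x != 0 -> exists2 y, y \in Rg 0%N & x * y = 1.

Definition hom_max_ideal (R : comNzRingType) (Rg : nat -> pred R) (r : R) : Prop :=
  exists (s : seq nat) (c : nat -> R),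
    [/\ (forall i, c i \in Rg i), c 0%N = 0 & r = \sum_(i <- s) c i].

Definition graded_module (R : comNzRingType) (Rg : nat -> pred R)
    (M : lmodType R) (Mg : int -> pred M) :=
  direct_sum_grading Mg /\
  forall i j (r : R) (x : M), r \in Rg i -> x \in Mg j -> r *: x \in Mg (i%:Z + j).

Definition fin_gen (R : comNzRingType) (M : lmodType R) :=
  exists s : seq M, forall x : M,
    exists c : 'I_(size s) -> R, x = \sum_(i < size s) c i *: s`_i.

Definition nonzerodivisor (R : comNzRingType) (r : R) :=
  forall a : R, r * a = 0 -> a = 0.

Definition torsion_free (R : comNzRingType) (M : lmodType R) :=
  forall (r : R) (x : M), nonzerodivisor r -> r *: x = 0 -> x = 0.

Section Loc.
Variables (R : comNzRingType) (Rg : nat -> pred R).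
Local Notation inm := (hom_max_ideal Rg).

Definition loc_eq (M : lmodType R) (p q : M * R) :=
  exists2 w : R, ~ inm w & w *: (q.2 *: p.1 - p.2 *: q.1) = 0.

Definition locR_eq (p q : R * R) :=
  exists2 w : R, ~ inm w & w * (q.2 * p.1 - p.2 * q.1) = 0.

Definition locR_unit (u : R * R) :=
  ~ inm u.2 /\ exists2 v : R * R, ~ inm v.2 & locR_eq (u.1 * v.1, u.2 * v.2) (1, 1).

Definition loc_add (M : lmodType R) (p q : M * R) : M * R :=
  (q.2 *: p.1 + p.2 *: q.1, p.2 * q.2).

Definition loc_scale (M : lmodType R) (a : R * R) (p : M * R) : M * R :=
  (a.1 *: p.1, a.2 * p.2).

(* phi : M_m -> N_m, given on representatives x/s (s not in m), is a
   well-defined morphism of R_m-modules. *)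
Definition loc_hom (M N : lmodType R) (phi : M -> R -> N * R) :=
  [/\ (forall x s, ~ inm s -> ~ inm (phi x s).2),
      (forall x s y t, ~ inm s -> ~ inm t -> loc_eq (x, s) (y, t) ->
          loc_eq (phi x s) (phi y t)),
      (forall x s y t, ~ inm s -> ~ inm t ->
          loc_eq (let p := loc_add (x, s) (y, t) in phi p.1 p.2)
                 (loc_add (phi x s) (phi y t))) &
      (forall a b x s, ~ inm b -> ~ inm s ->
          loc_eq (let p := loc_scale (a, b) (x, s) in phi p.1 p.2)
                 (loc_scale (a, b) (phi x s)))].
End Loc.

(* Main.v *)
Require Import Defs.
From mathcomp Require Import all_boot all_order all_algebra.
From mathcomp Require Import ring zify.
From HB Require Import structures.
From Stdlib Require Import ClassicalEpsilon.
Set Implicit Arguments. Unset Strict Implicit.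
Import GRing.Theory.
Local Open Scope ring_scope.

Section Graded.
Variables (R : comNzRingType) (Rg : nat -> pred R).
Hypotheses (hR : Ngraded_ring Rg) (hR0 : deg0_field Rg).

Lemma Rg0 i : 0 \in Rg i.
Proof. by case: hR => [[]]. Qed.

Lemma RgD i x y : x \in Rg i -> y \in Rg i -> x + y \in Rg i.
Proof.
case: hR => [[h0 hsub _ _] _ _] hx hy.
have hny : - y \in Rg i by rewrite -sub0r; apply: hsub.
by rewrite -[y]opprK; apply: hsub.
Qed.

Lemma Rg_sum i (I : Type) (r : seq I) (F : I -> R) :
  (forall j, F j \in Rg i) -> \sum_(j <- r) F j \in Rg i.
Proof.
move=> hF; apply: (big_ind (fun x => x \in Rg i)); first exact: Rg0.
  by move=> ? ?; apply: RgD.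
by move=> j _; apply: hF.
Qed.

Lemma sum_iota n (F : nat -> R) : \sum_(i < n) F i = \sum_(i <- iota 0 n) F i.
Proof. by rewrite -(big_mkord xpredT F) /index_iota subn0. Qed.

Definition dec (r : R) (p : {poly R}) := (forall i, p`_i \in Rg i) /\ p.[1] = r.

Lemma dec_seq (s : seq nat) (c : nat -> R) : (forall i, c i \in Rg i) ->
  dec (\sum_(i <- s) c i) (\sum_(i <- s) c i *: 'X^i).
Proof.
move=> hc; split.
  move=> k; rewrite coef_sum; apply: Rg_sum => j.
  rewrite coefZ coefXn; case: eqP => [->|_]; first by rewrite mulr1.
  by rewrite mulr0 Rg0.
rewrite horner_sum; apply: eq_bigr => i _.
by rewrite hornerZ hornerXn expr1n mulr1.
Qed.

Lemma dec_exists r : exists p, dec r p.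
Proof.
case: hR => [[_ _ hex _] _ _].
have [s [c [_ hc ->]]] := hex r.
by eexists; apply: dec_seq.
Qed.

Lemma dec_uniq r p q : dec r p -> dec r q -> p = q.
Proof.
case: hR => [[_ hsub _ huniq] _ _] [hp <-] [hq e].
apply: subr0_eq; set d := p - q.
have hd : forall i, d`_i \in Rg i by move=> i; rewrite coefB; apply: hsub.
have hs : \sum_(i <- iota 0 (size d)) d`_i = 0.
  have : d.[1] = 0 by rewrite /d hornerD hornerN e subrr.
  rewrite horner_coef (sum_iota _ (fun i => d`_i * 1 ^+ i)) => h; rewrite -[RHS]h.
  by apply: eq_bigr => i _; rewrite expr1n mulr1.
apply/polyP => i; rewrite coef0.
case: (ltnP i (size d)) => hi.
  apply: (huniq (iota 0 (size d)) (fun i => d`_i)) => //; first exact: iota_uniq.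
  by rewrite mem_iota add0n hi.
by rewrite nth_default.
Qed.

Lemma dec_mul a b p q : dec a p -> dec b q -> dec (a * b) (p * q).
Proof.
case: hR => [_ _ hmul] [hp ea] [hq eb]; split; last by rewrite hornerM ea eb.
move=> i; rewrite coefM; apply: Rg_sum => j.
have hj : (j <= i)%N by rewrite -ltnS.
by have := hmul _ _ _ _ (hp j) (hq (i - j)%N); rewrite subnKC.
Qed.

Lemma dec0 : dec 0 0.
Proof. by split; [move=> i; rewrite coef0 Rg0 | rewrite horner0]. Qed.

Lemma inm_dec r p : dec r p -> (hom_max_ideal Rg r <-> p`_0 = 0).
Proof.
move=> hp; split.
  move=> [s [c [hc c0 er]]].
  have := @dec_seq s c hc; rewrite -er => /(dec_uniq hp) ->.
  rewrite coef_sum big1 // => i _; rewrite coefZ coefXn.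
  by case: eqP => [<-|_]; rewrite ?c0 ?mul0r ?mulr0.
move=> p0; exists (iota 0 (size p)), (fun i => p`_i); split => //.
  by move=> i; case: hp.
case: hp => _ <-; rewrite horner_coef (sum_iota _ (fun i => p`_i * 1 ^+ i)).
by apply: eq_bigr => i _; rewrite expr1n mulr1.
Qed.

Lemma notinm r : ~ hom_max_ideal Rg r -> exists2 p, dec r p & p`_0 != 0.
Proof.
move=> h; have [p hp] := dec_exists r; exists p => //.
by apply/eqP => /(inm_dec hp).
Qed.

Lemma notinm1 : ~ hom_max_ideal Rg 1.
Proof.
case: hR => [_ h1 _].
have hd : dec 1 1.
  split; last by rewrite hornerC.
  by move=> i; rewrite coef1; case: i => [|i] //=; rewrite Rg0.
by move/(inm_dec hd); rewrite coef1 /=; apply/eqP; apply: oner_neq0.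
Qed.

Lemma notinmM a b : ~ hom_max_ideal Rg a -> ~ hom_max_ideal Rg b ->
  ~ hom_max_ideal Rg (a * b).
Proof.
move=> /notinm [p hp p0] /notinm [q hq q0].
move/(inm_dec (dec_mul hp hq)); rewrite coef0M => e.
have [y _ ey] := hR0 (proj1 hp 0%N) p0.
move/eqP: q0; apply; rewrite -[q`_0]mul1r -ey mulrAC e mul0r //.
Qed.

Lemma notinm_nzd w : ~ hom_max_ideal Rg w -> nonzerodivisor w.
Proof.
move=> /notinm [p hp p0] a e.
have [q hq] := dec_exists a.
have := dec_mul hp hq; rewrite e => /(dec_uniq dec0) pq.
have [y _ ey] := hR0 (proj1 hp 0%N) p0.
suff q0 : q = 0 by case: hq => _ <-; rewrite q0 horner0.
have hk : forall k j, (j < k)%N -> q`_j = 0.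
  elim=> [//|k IH] j; rewrite ltnS leq_eqVlt => /orP [/eqP ->|]; last exact: IH.
  have : (p * q)`_k = 0 by rewrite -pq coef0.
  rewrite coefM big_ord_recl /= subn0 big1 ?addr0.
    by move=> h; rewrite -[q`_k]mul1r -ey mulrAC h mul0r.
  move=> j' _; rewrite IH ?mulr0 //.
  by have := ltn_ord j'; rewrite /bump; lia.
by apply/polyP => j; rewrite coef0 (hk j.+1).
Qed.

End Graded.

Theorem lemma2p3 (R : comNzRingType) (Rg : nat -> pred R)
    (M N : lmodType R) (Mg : int -> pred M) (Ng : int -> pred N)
    (hR : Ngraded_ring Rg) (hR0 : deg0_field Rg)
    (hM : graded_module Rg Mg) (hN : graded_module Rg Ng)
    (fgM : fin_gen M) (fgN : fin_gen N) (tfN : torsion_free N)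
    (phi : M -> R -> N * R) (hphi : loc_hom Rg phi) :
  exists (phit : {linear M -> N}) (u : R * R),
    locR_unit Rg u /\
    forall (x : M) (s : R), ~ hom_max_ideal Rg s ->
      loc_eq Rg (phit x, s) (loc_scale u (phi x s)).
Proof.
case: hphi => hden hwd hadd hscal.
case: fgM => g hg.
pose sd (i : 'I_(size g)) := (phi g`_i 1).2.
pose S := \prod_(i < size g) sd i.
have h1 := notinm1 hR.
have hsd : forall i, ~ hom_max_ideal Rg (sd i) := fun i => hden _ _ h1.
have hS : ~ hom_max_ideal Rg S.
  by apply: (big_ind (fun x => ~ hom_max_ideal Rg x)) => // *; apply: notinmM.
have canc : forall w (x y : N), ~ hom_max_ideal Rg w -> w *: x = w *: y -> x = y.
  move=> w x y hw e; apply/eqP; rewrite -subr_eq0; apply/eqP.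
  by apply: (tfN _ _ (notinm_nzd hR hR0 hw)); rewrite scalerBr e subrr.
have exa : forall (p q : N * R), loc_eq Rg p q -> q.2 *: p.1 = p.2 *: q.1.
  move=> p q [w hw e]; apply/eqP; rewrite -subr_eq0; apply/eqP.
  exact: (tfN _ _ (notinm_nzd hR hR0 hw)) e.
pose Q x n := S *: (phi x 1).1 = (phi x 1).2 *: n.
have Qu : forall x n n', Q x n -> Q x n' -> n = n'.
  by move=> x n n'; rewrite /Q => -> /(canc _ _ _ (hden x 1 h1)).
have Q0 : Q 0 0.
  have := exa _ _ (hscal 0 1 0 1 h1 h1); rewrite /= scale0r mulr1 mul1r scale0r.
  rewrite /Q scaler0 -(scaler0 _ (phi 0 1).2) => /(canc _ _ _ (hden 0 1 h1)) ->.
  by rewrite !scaler0.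
have QD : forall x n x' n', Q x n -> Q x' n' -> Q (x + x') (n + n').
  move=> x n x' n'; have := exa _ _ (hadd x 1 x' 1 h1 h1).
  rewrite /= !scale1r mulr1 /Q.
  have := hden x 1 h1; have := hden x' 1 h1.
  case: (phi x 1) => [a al]; case: (phi x' 1) => [b be]; case: (phi (x + x') 1) => [z ga] /=.
  move=> hbe hal e hx hx'.
  apply: (canc (al * be)); first exact: notinmM.
  rewrite scalerA [_ * S]mulrC -(scalerA S) e !scalerDr !scalerA.
  rewrite (_ : S * ga * be = (ga * be) * S); last by ring.
  rewrite (_ : S * ga * al = (ga * al) * S); last by ring.
  rewrite -!(scalerA _ S) hx hx' !scalerA.
  by congr (_ *: _ + _ *: _); ring.
have QZ : forall r x n, Q x n -> Q (r *: x) (r *: n).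
  move=> r x n; have := exa _ _ (hscal r 1 x 1 h1 h1).
  rewrite /= mulr1 /Q.
  have := hden x 1 h1.
  case: (phi x 1) => [a al]; case: (phi (r *: x) 1) => [z ga] /=.
  move=> hal e hx.
  apply: (canc al) => //.
  rewrite scalerA [_ * S]mulrC -(scalerA S) -(mul1r al) e mul1r !scalerA.
  rewrite (_ : S * ga * r = (ga * r) * S); last by ring.
  by rewrite -scalerA hx !scalerA; congr (_ *: _); ring.
have Qg : forall i : 'I_(size g),
    Q g`_i ((\prod_(j < size g | j != i) sd j) *: (phi g`_i 1).1).
  move=> i; rewrite /Q scalerA; congr (_ *: _).
  by rewrite /S (bigD1 i).
have Qex : forall x, exists n, Q x n.
  move=> x; have [c ->] := hg x.
  exists (\sum_(i < size g) c i *: ((\prod_(j < size g | j != i) sd j) *: (phi g`_i 1).1)).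
  apply: (big_ind2 Q Q0 QD) => i _; apply: QZ; apply: Qg.
pose phit x := proj1_sig (constructive_indefinite_description _ (Qex x)).
have hQ : forall x, Q x (phit x) :=
  fun x => proj2_sig (constructive_indefinite_description _ (Qex x)).
have lf : linear phit.
  move=> a x y; apply: (Qu (a *: x + y)); first exact: hQ.
  by apply: QD; [apply: QZ|]; apply: hQ.
exists (HB.pack_for {linear M -> N} phit (GRing.isLinear.Build _ _ _ _ phit lf)).
exists (S, 1); split.
  split => //; exists (1, S) => //=; exists 1 => //.
  by rewrite !mul1r !mulr1 subrr.
move=> x s hs; exists 1 => //=.
rewrite scale1r mul1r; apply/eqP; rewrite subr_eq0; apply/eqP.
have := exa _ _ (hscal 1 s x 1 hs h1).
have := hQ x; rewrite /Q.
have := hden x 1 h1.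
rewrite /= scale1r mulr1.
case: (phi x 1) => [a al]; case: (phi x s) => [y be] /=.
move=> hal hQx e.
apply: (canc al) => //.
rewrite scale1r in e.
rewrite scalerA [al * be]mulrC -(scalerA be) -hQx scalerA [be * S]mulrC -(scalerA S) -e !scalerA.
by congr (_ *: _); ring.
Qed.
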